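(* Let $R>0$ and let $s: I\to\mathbb{R}^n$ be an arc-length parametrized curve defined on an open interval $I\subseteq\mathbb{R}$. Suppose $s$ is continuous and $R$-monotone, i.e. for every closed ball $B\subseteq\mathbb{R}^n$ of radius at most $R$, the inverse image $s^{-1}(B)$ is a connected subset of $I$. Then $s$ is differentiable at almost every point of $I$.
   Context: A closed ball is a set $\{x\in\mathbb{R}^n:\|x-a\|\le \rho\}$ with center $a$ and radius $\rho$. For $R>0$, an arc-length parametrized curve $s$ is called $R$-monotone if the inverse image under $s$ of every closed ball of radius at most $R$ is connected. *)

(* Defs.v *)
(* R : realType, R^n represented as 'rV[R]_n
   with the EUCLIDEAN norm defined below (the library norm on 'rV is sup-norm). *)
From HB Require Import structures.
From mathcomp Require Import all_boot all_order all_algebra.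
From mathcomp Require Import all_classical all_reals all_analysis.
Set Implicit Arguments. Unset Strict Implicit. Unset Printing Implicit Defensive.
Import Order.TTheory GRing.Theory Num.Theory.
Import numFieldNormedType.Exports.
Local Open Scope classical_set_scope.
Local Open Scope ring_scope.

Definition enorm (R : realType) (n : nat) (v : 'rV[R]_n) : R :=
  Num.sqrt (\sum_(i < n) v ord0 i ^+ 2).

Definition cball (R : realType) (n : nat) (a : 'rV[R]_n) (rho : R) : set 'rV[R]_n :=
  [set x | enorm (x - a) <= rho].

Definition polyline_length (R : realType) (n : nat) (s : R -> 'rV[R]_n)
  (t : seq R) : R :=
  \sum_(i < (size t).-1) enorm (s (nth 0 t i.+1) - s (nth 0 t i)).

Definition curve_length (R : realType) (n : nat) (s : R -> 'rV[R]_n) (a b : R)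
  : \bar R :=
  ereal_sup [set (polyline_length s t)%:E | t in
    [set t : seq R | sorted <=%R t /\ all (fun x => (a <= x) && (x <= b)) t]].

Definition arclength_param (R : realType) (n : nat) (I : set R)
  (s : R -> 'rV[R]_n) : Prop :=
  forall a b, I a -> I b -> a <= b -> curve_length s a b = (b - a)%:E.

Definition R_monotone (R : realType) (n : nat) (Rad : R) (I : set R)
  (s : R -> 'rV[R]_n) : Prop :=
  forall (a : 'rV[R]_n) (rho : R), 0 < rho -> rho <= Rad ->
    connected (I `&` s @^-1` cball a rho).

(* Main.v *)
Require Import Defs.
From HB Require Import structures.
From mathcomp Require Import all_boot all_order all_algebra.
From mathcomp Require Import all_classical all_reals all_analysis.
From mathcomp Require Import lra.
Import Order.TTheory GRing.Theory Num.Theory.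
Import numFieldNormedType.Exports.
Local Open Scope classical_set_scope.
Local Open Scope ring_scope.

Section LS.
Context {R : realType}.
Local Open Scope ereal_scope.

Lemma ls_le (g : cumulative R R) (c : R) : (0 < c)%R ->
  (forall x y, (x <= y)%R -> (g y - g x <= c * (y - x))%R) ->
  forall A, lebesgue_stieltjes_measure g A <= c%:E * lebesgue_measure A.
Proof.
move=> c0 gc A.
rewrite /lebesgue_measure /lebesgue_stieltjes_measure /measure_extension.
rewrite /mu_ext -ereal_inf_pZl//.
apply: le_ereal_inf_tmp => _ [_ [B [mB AB] <-] <-].
apply: le_trans (ereal_inf_lbound _) _.
  by exists B; split.
rewrite -nneseriesZl; last by move=> i _; exact: wlength_ge0.
apply: lee_nneseries; first by move=> *; exact: wlength_ge0.
move=> i _.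
have /ocitvP[->|[[x1 x2] /= x12 ->]] := mB i.
  by have := wlength0 g; have := wlength0 idfun; move=> /= -> ->; rewrite mule0.
have x12w := ltW x12; rewrite !wlength_itv_bnd// -EFinM lee_fin.

exact: gc x12w.
Qed.
End LS.
Lemma lip_cont {R : realType} (f : R -> R) :
  (forall x y, `|f x - f y| <= `|x - y|) -> continuous f.
Proof.
move=> fL x; apply/cvgrPdist_lt => e e0; near=> y.
apply: le_lt_trans (fL x y) _; near: y.
exact: (@cvgr_dist_lt _ _ _ _ _ id x cvg_id e e0).
Unshelve. all: by end_near. Qed.

Section Core.
Context {R : realType}.
Variable f : R -> R.
Hypothesis fL : forall x y, `|f x - f y| <= `|x - y|.

Definition gf x := f x + x.

Lemma gf_nd : {homo gf : x y / x <= y}.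
Proof.
move=> x y xy; rewrite /gf.
have := fL y x; rewrite (ger0_norm (x:=y-x)) ?subr_ge0// ler_norml => /andP[h _].
lra.
Qed.

Lemma gf_rc : forall x, gf @ at_right x --> gf x.
Proof.
apply: right_continuousW => x; apply: continuousD; first exact: lip_cont.
exact: cvg_id.
Qed.

HB.instance Definition _ := isCumulative.Build R _ R gf gf_nd gf_rc.

Lemma gf_lip x y : x <= y -> gf y - gf x <= 2 * (y - x).
Proof.
move=> xy; rewrite /gf.
have := fL y x; rewrite (ger0_norm (x:=y-x)) ?subr_ge0// ler_norml => /andP[_ h].
lra.
Qed.

Local Open Scope ereal_scope.
Lemma core : (@lebesgue_measure R).-negligible [set x | ~ derivable f x 1].
Proof.
pose mu := lebesgue_stieltjes_measure gf.
have muitv (a b : R) : (a <= b)%R -> mu `]a, b]%classic = (gf b - gf a)%:E.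
  move=> ab; rewrite /mu /lebesgue_stieltjes_measure /measure_extension.
  rewrite measurable_mu_extE; last exact: is_ocitv.
  exact: wlength_itv_bnd.
pose E (k : nat) := `](- k%:R)%R, k%:R]%classic : set R.
have mE k : @measurable _ (measurableTypeR R) (E k) by exact: measurable_itv.
have muE k : mu (E k) < +oo.
  by rewrite muitv ?ltry//; rewrite lerNl; apply: (@le_trans _ _ 0%R); rewrite ?oppr_le0 ler0n.
pose nu k : {finite_measure set (measurableTypeR R) -> \bar R} := mfrestr (mE k) (muE k).
have dom k : nu k `<< (@lebesgue_measure R).
  apply/null_content_dominatesP => A mA A0.
  rewrite /nu /mfrestr; apply/eqP; rewrite eq_le measure_ge0 andbT.
  apply: (le_trans (@ls_le R _ 2%R _ _ _)) => //.
    by move=> x y xy; exact: gf_lip.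
  suff -> : lebesgue_measure (A `&` E k) = 0 by rewrite mule0.
  apply/eqP; rewrite eq_le measure_ge0 andbT -A0.
  apply: le_measure; rewrite ?inE//.
  exact: measurableI mA (mE k).
have /choice[h hP] := fun k => radon_nikodym_sigma_finite (dom k).
pose fk k := fine \o h k.
have hE k : EFin \o fk k = h k.
  by apply/funext => t /=; rewrite fineK//; case: (hP k).
have intk k : (@lebesgue_measure R).-integrable setT (EFin \o fk k).
  by rewrite hE; case: (hP k).
pose a k := BRight (- k%:R)%R : itv_bound R.
have intk' k y : (@lebesgue_measure R).-integrable [set` Interval (a k) (BRight y)] (EFin \o fk k).
  by apply: integrableS (intk k) => //; exact: measurable_itv.
have locf k : locally_integrable setT (fk k).
  exact: open_integrable_locally openT (intk k).
pose F k y := (\int[@lebesgue_measure R]_(t in [set` Interval (a k) (BRight y)]) (fk k t))%R.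
have Fval k y : (- k%:R <= y)%R -> (y <= k%:R)%R -> F k y = (gf y - gf (- k%:R))%R.
  move=> ky yk; rewrite /F /Rintegral.
  have e t : (fk k t)%:E = h k t by rewrite -(hE k).
  under eq_integral => t _ do rewrite e.
  have [_ _ _ hk] := hP k.
  rewrite -hk; last exact: measurable_itv.
  rewrite (_ : nu k _ = mu (`](- k%:R)%R, y]%classic `&` E k)) //.
  rewrite setIidl ?muitv//.
  by apply: subset_itvl; rewrite bnd_simp.
have ftc k := FTC1 (intk' k) (locf k).
have N : (@lebesgue_measure R).-negligible (\bigcup_k ~` [set x | (a k < BRight x)%E ->
   derivable (F k) x 1 /\ (F k)^`()%classic x = fk k x]).
  by apply: negligible_bigcup => k; exact: (ftc k).
apply: negligibleS N.
move=> x /= ndf.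
pose k := (Num.truncn `|x|%R).+1.
have xk : (`|x| < k%:R)%R.
  by have /andP[_ ->] := truncn_itv (normr_ge0 x).
have xk1 : (- k%:R < x)%R by move: xk; rewrite ltr_norml => /andP[].
have xk2 : (x < k%:R)%R by move: xk; rewrite ltr_norml => /andP[].
exists k => //; move=> /(_ _) [].
  by rewrite /a lte_fin.
move=> dF _; apply: ndf.
have xin : x \in `](- k%:R)%R, k%:R[ by rewrite in_itv /= xk1 xk2.
have dg : derivable gf x 1.
  have dH : derivable (F k + cst (gf (- k%:R)))%R x 1.
    exact: derivableD dF (derivable_cst _ _ _).
  apply: near_eq_derivable dH.
  near=> y.
  have : y \in `](- k%:R)%R, k%:R[ by near: y; exact: near_in_itvoo.
  rewrite in_itv /= => /andP[y1 y2].
  have := Fval k y (ltW y1) (ltW y2).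
  move=> e; rewrite -[RHS](subrK (gf (- k%:R)%R) (gf y)) -e; reflexivity.
have dH2 : derivable (gf - id)%R x 1.
  by apply: derivableB => //; exact: derivable_id.
apply: near_eq_derivable dH2.
near=> y; by rewrite /gf /= addrK.
Unshelve. all: by end_near.
Qed.
End Core.

Section Helpers.
Context {R : realType} {n : nat}.

Lemma enorm_coord (v : 'rV[R]_n) (i : 'I_n) : `|v ord0 i| <= enorm v.
Proof.
rewrite /enorm -sqrtr_sqr ler_wsqrtr// (bigD1 i)//= lerDl.
by apply: sumr_ge0 => j _; exact: sqr_ge0.
Qed.

Lemma arc_lip (I : set R) (s : R -> 'rV[R]_n) a b :
  arclength_param I s -> I a -> I b -> a <= b -> enorm (s b - s a) <= b - a.
Proof.
move=> arc Ia Ib ab; have := arc a b Ia Ib ab; rewrite /curve_length => e.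
have : ((polyline_length s [:: a; b])%:E <= (b - a)%:E)%E.
  rewrite -e; apply: ereal_sup_ubound; exists [:: a; b] => //.
  by split; rewrite /= ?ab ?lexx ?andbT.
by rewrite lee_fin /polyline_length /= big_ord1.
Qed.

Lemma coord_lip (I : set R) (s : R -> 'rV[R]_n) (i : 'I_n) x y :
  arclength_param I s -> I x -> I y -> `|s x ord0 i - s y ord0 i| <= `|x - y|.
Proof.
move=> arc Ix Iy.
wlog xy : x y Ix Iy / x <= y.
  move=> W; have [xy|yx] := leP x y; first exact: W.
  by rewrite distrC [X in _ <= X]distrC; apply: W => //; exact: ltW.
rewrite distrC [X in _ <= X]distrC (ger0_norm (x := y - x)) ?subr_ge0//.
apply: (le_trans _ (@arc_lip I s x y arc Ix Iy xy)).
by have := enorm_coord (s y - s x) i; rewrite !mxE.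
Qed.

Definition clamp (a b t : R) := if t < a then a else if b < t then b else t.

Lemma clamp_lip a b x y : a <= b -> `|clamp a b x - clamp a b y| <= `|x - y|.
Proof.
move=> ab; rewrite /clamp.
have h1 := ler_norm (x - y).
have h2 : y - x <= `|x - y| by rewrite distrC ler_norm.
have h0 := normr_ge0 (x - y).
move: h0 h1 h2; set N := `|x - y| => h0 h1 h2.
rewrite ler_norml.
case: (ltP x a) => ?; case: (ltP b x) => ?; case: (ltP y a) => ?; case: (ltP b y) => ?;
  apply/andP; split; lra.
Qed.

Lemma clamp_in a b t : a <= b -> a <= clamp a b t <= b.
Proof.
move=> ab; rewrite /clamp.
by case: (ltP t a) => ?; case: (ltP b t) => ?; apply/andP; split; lra.
Qed.

Lemma clamp_id a b t : a <= t -> t <= b -> clamp a b t = t.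
Proof.
by move=> ha hb; rewrite /clamp; case: (ltP t a) => ?; case: (ltP b t) => ?; lra.
Qed.

Lemma coords_diff (s : R -> 'rV[R]_n) t :
  (forall i : 'I_n, derivable (fun x => s x ord0 i) t 1) -> differentiable s t.
Proof.
move=> ds; apply/derivable1_diffP.
have h i : derivable (fun x => s x ord0 i *: 'e_i) t 1.
  apply/derivable1_diffP; apply: differentiableZl.
  exact/derivable1_diffP.
have := derivable_sum (h 0%N).
apply: near_eq_derivable; near=> x.
by rewrite fct_sumE -row_sum_delta.
Unshelve. all: by end_near.
Qed.
End Helpers.

Theorem mainTheorem1 (R : realType) (n : nat) (Rad : R) (I : set R)
  (s : R -> 'rV[R]_n) :
  0 < Rad ->
  open I -> is_interval I ->
  arclength_param I s ->
  (forall t, I t -> {for t, continuous s}) ->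
  R_monotone Rad I s ->
  (@lebesgue_measure R).-negligible [set t | I t /\ ~ differentiable s t].
Proof.
move=> Rad0 oI iI arc cont mono.
have loc a b : I a -> I b -> a <= b ->
    (@lebesgue_measure R).-negligible [set t | a < t < b /\ ~ differentiable s t].
  move=> Ia Ib ab.
  have inI t : I (clamp a b t) by apply: (iI a b Ia Ib); exact: clamp_in.
  pose u (j : 'I_n) t := s (clamp a b t) ord0 j.
  have uL j x y : `|u j x - u j y| <= `|x - y|.
    have := @coord_lip R n I s j _ _ arc (inI x) (inI y).
    by move/le_trans; apply; exact: clamp_lip.
  have NN : (@lebesgue_measure R).-negligible
      (\bigcup_k [set t | exists j : 'I_n, val j = k /\ ~ derivable (u j) t 1]).
    apply: negligible_bigcup => k; case: (ltnP k n) => kn.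
      apply: negligibleS (@core R _ (uL (Ordinal kn))) => t /= [j [jk nd]].
      by have -> : Ordinal kn = j by apply: val_inj; rewrite /= jk.
    apply: negligibleS (negligible_set0 _) => t /= [j [jk _]].
    by move: (ltn_ord j); rewrite jk ltnNge kn.
  apply: negligibleS NN => t /= [/andP[ta tb] nd].
  have [j nj] : exists j : 'I_n, ~ derivable (u j) t 1.
    apply/existsNP => allj; apply: nd; apply: coords_diff => j.
    apply: near_eq_derivable (allj j); near=> x.
    have : x \in `]a, b[ by near: x; apply: near_in_itvoo; rewrite in_itv /= ta tb.
    by rewrite in_itv /= => /andP[xa xb]; rewrite /u clamp_id // ltW.
  by exists (val j) => //; exists j.
pose D (k : nat) : R := (k.+1%:R)^-1.
have D0 k : 0 < D k by rewrite /D invr_gt0 ltr0n.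
pose A (k j : nat) : R := - k%:R + (j%:R - 1) * D k.
pose B (k j : nat) : R := - k%:R + (j%:R + 2) * D k.
pose S (k j : nat) := [set t | (I (A k j) /\ I (B k j)) /\
   (A k j < t < B k j /\ ~ differentiable s t)].
have NS : (@lebesgue_measure R).-negligible (\bigcup_k \bigcup_j S k j).
  apply: negligible_bigcup => k; apply: negligible_bigcup => j.
  have [[IA IB]|nI] := pselect (I (A k j) /\ I (B k j)).
    apply: negligibleS (loc _ _ IA IB _) => [t [_ []]//|].
    rewrite /A /B lerD2l ler_pM2r//; lra.
  by apply: negligibleS (negligible_set0 _) => t [].
apply: negligibleS NS => t /= [It nd].
have /nbhs_ballP[r r0 rI] := oI t It.
pose K := Num.truncn (`|t| + 3 / r).
pose k := K.+1.
have hk : `|t| + 3 / r < k%:R.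
  by have /andP[_ ->] := truncn_itv (addr_ge0 (normr_ge0 t) (divr_ge0 (ler0n _ 3) (ltW r0))).
have tn := normr_ge0 t.
have tl : - `|t| <= t by rewrite lerNl -normrN ler_norm.
have tr : t <= `|t| by exact: ler_norm.
have rp : 0 < 3 / r by rewrite divr_gt0.
have kS : k.+1%:R = k%:R + 1 :> R by rewrite -natr1.
have r3 : 3 * D k < r.
  have h3 : 3 / r < k.+1%:R by rewrite kS; lra.
  by rewrite /D ltr_pdivrMr ?ltr0n// mulrC -ltr_pdivrMr.
pose W := (t + k%:R) * k.+1%:R.
have W0 : 0 <= W by rewrite /W mulr_ge0 //; lra.
pose j := Num.truncn W.
have /andP[jW Wj] := truncn_itv W0; rewrite -/j in jW Wj.
have hWD : W * D k = t + k%:R.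
  by rewrite /W /D -mulrA mulfV ?mulr1 // pnatr_eq0.
have hP : 0 <= (W - j%:R) * D k by rewrite mulr_ge0 // ?subr_ge0 // ltW.
have hQ : 0 < (j%:R + 1 - W) * D k by rewrite mulr_gt0 // subr_gt0 natr1.
have eA : A k j = - k%:R + j%:R * D k - D k by rewrite /A mulrBl mul1r addrA.
have eB : B k j = - k%:R + j%:R * D k + 2 * D k by rewrite /B mulrDl addrA.
have Dk := D0 k.
exists k => //; exists j => //; split; last by rewrite eA eB; split => //; apply/andP; split; lra.
split; apply: rI; rewrite /ball /= ?eA ?eB ltr_distlC; apply/andP; split; lra.
Unshelve. all: by end_near.
Qed.
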